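(* Let $f:\mathbb{R}^n\to\mathbb{R}$ be differentiable, $\mu$-strongly convex, with $L$-Lipschitz gradient $\nabla f$, and let $x^*$ be its unique minimizer. Given $\varepsilon>0$, suppose $\alpha<\left(\frac{4\varepsilon\mu}{L^2n}\right)^{1/2}$. Let $\mathcal{E}^t$ denote the event $\|\nabla f(x^t)\|_\infty\le\eta$. If $x\in\mathbb{R}^n$ satisfies $f(x)-f(x^* )>\varepsilon$, then the iterate $x^{t+1}$ of Markov gradient descent satisfies $$\mathbb{E}\left[f(x^{t+1})\,\middle|\,x^t=x,\mathcal{E}^t\right]<f(x).$$
   Context: A differentiable $f$ is $\mu$-strongly convex if $\langle\nabla f(x)-\nabla f(y),x-y\rangle\ge\mu\|x-y\|_2^2$ for all $x,y$. Markov gradient descent (MGD) with lattice resolution $\alpha>0$ and normalizer $\eta>0$: start at $x^0\in\alpha\mathbb{Z}^n$; at step $t$, for each coordinate $i$, conditionally on $x^t$, $\Delta^t_i\in\{0,1\}$ is Bernoulli with $\mathbb{P}[\Delta^t_i=1\mid x^t]=\min(|\partial_i f(x^t)|/\eta,1)$, and $x^{t+1}_i=x^t_i-\alpha\,\mathrm{sgn}(\partial_i f(x^t))\Delta^t_i$. *)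

(* Defs.v *)
From HB Require Import structures.
From mathcomp Require Import all_boot all_order all_algebra.
From mathcomp Require Import all_classical all_reals all_analysis.
Set Implicit Arguments. Unset Strict Implicit. Unset Printing Implicit Defensive.
Import Order.TTheory GRing.Theory Num.Theory.
Import numFieldNormedType.Exports.
Local Open Scope ring_scope.

Section MGD.
Variables (R : realType) (n : nat).

Definition dotv (x y : 'rV[R]_n) : R := \sum_(i < n) x ord0 i * y ord0 i.
Definition norm2 (x : 'rV[R]_n) : R := Num.sqrt (dotv x x).

Definition is_gradient (f : 'rV[R]_n -> R) (g : 'rV[R]_n -> 'rV[R]_n) : Prop :=
  forall x, differentiable f x /\ forall v, 'd f x v = dotv (g x) v.

Definition strongly_convex_grad (mu : R) (g : 'rV[R]_n -> 'rV[R]_n) : Prop :=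
  forall x y, dotv (g x - g y) (x - y) >= mu * dotv (x - y) (x - y).

Definition lipschitz_grad (L : R) (g : 'rV[R]_n -> 'rV[R]_n) : Prop :=
  forall x y, norm2 (g x - g y) <= L * norm2 (x - y).

Definition is_minimizer (f : 'rV[R]_n -> R) (xs : 'rV[R]_n) : Prop :=
  forall y, f xs <= f y.

(* probability that coordinate i moves: min(|d_i f(x)|/eta, 1) *)
Definition mgd_p (g : 'rV[R]_n -> 'rV[R]_n) (eta : R) (x : 'rV[R]_n) (i : 'I_n) : R :=
  Num.min (`|g x ord0 i| / eta) 1.

(* next iterate given the realisation d of (Delta_1,...,Delta_n) *)
Definition mgd_next (g : 'rV[R]_n -> 'rV[R]_n) (alpha : R) (x : 'rV[R]_n)
  (d : {ffun 'I_n -> bool}) : 'rV[R]_n :=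
  \row_(i < n) (x ord0 i - alpha * Num.sg (g x ord0 i) * (d i)%:R).

(* E[ f(x^{t+1}) | x^t = x ]: the Delta_i are independent Bernoulli(mgd_p i) *)
Definition mgd_step_expect (f : 'rV[R]_n -> R) (g : 'rV[R]_n -> 'rV[R]_n)
  (alpha eta : R) (x : 'rV[R]_n) : R :=
  \sum_(d : {ffun 'I_n -> bool})
     (\prod_(i < n) (if d i then mgd_p g eta x i else 1 - mgd_p g eta x i))
     * f (mgd_next g alpha x d).

End MGD.

(* Main.v *)
Require Import Defs.
From HB Require Import structures.
From mathcomp Require Import all_boot all_order all_algebra.
From mathcomp Require Import all_classical all_reals all_analysis.
From mathcomp Require Import lra ring.
Import Order.TTheory GRing.Theory Num.Theory.
Import numFieldNormedType.Exports.
Local Open Scope ring_scope.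

Section S.
Variables (R : realType) (n : nat).
Implicit Types (f : 'rV[R]_n -> R) (g : 'rV[R]_n -> 'rV[R]_n).

Lemma line_derive f y v t (D : R) : is_derive (y + t*:v) v f D ->
  is_derive t 1 (fun s : R => f (y + s*:v)) D.
Proof.
case=> H1 H2.
have E : (fun h : R => h^-1 *: (((fun s : R => f (y + s *: v)) \o shift t) (h *: 1) - f (y + t*:v))) = (fun h : R => h^-1 *: ((f \o shift (y + t*:v)) (h *: v) - f (y + t *: v))).
  apply: funext => h /=. congr (_ *: (f _ - _)).
  by rewrite [h *: 1]mulr1 scalerDl addrCA addrA.
by split; rewrite /derivable /derive E.
Qed.

Lemma grad_line f g (Hg : is_gradient f g) (y v : 'rV[R]_n) (t : R) :
  is_derive t 1 (fun s : R => f (y + s*:v)) (dotv (g (y + t*:v)) v).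
Proof.
apply: line_derive; have [df dd] := Hg (y + t*:v).
rewrite -dd -deriveE //; apply: derivableP; exact: diff_derivable.
Qed.

Lemma mono01 (h dh : R -> R) : (forall t : R, is_derive t (1:R) h (dh t)) ->
  (forall t, 0 < t < 1 -> dh t <= 0) -> h 1 <= h 0.
Proof.
move=> Hd Hle.
have [c] := @MVT R h dh 0 1 ltr01 (fun z _ => Hd z) (derivable_within_continuous (fun z _ => @ex_derive _ _ _ _ _ _ _ (Hd z))).
rewrite in_itv /= => /andP [c0 c1] E.
rewrite -subr_le0 E subr0 mulr1; apply: Hle; by rewrite c0 c1.
Qed.

Lemma quad_derive (phi : R -> R) (dphi : R) (a K t : R) : is_derive t (1:R) phi dphi ->
  is_derive t (1:R) (phi - (id * cst a + id ^+ 2 * cst K)) (dphi - (a + 2 * t * K)).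
Proof.
move=> H.
apply: is_derive_eq.
rewrite !scaler0 !add0r /cst /= [(2 * _)%:A]mulr1 [a%:A]mulr1 expr1.
rewrite /GRing.scale /=. ring.
Qed.


Lemma dotvDl (a b c : 'rV[R]_n) : dotv (a + b) c = dotv a c + dotv b c.
Proof. by rewrite /dotv -big_split; apply: eq_bigr => i _; rewrite mxE mulrDl. Qed.
Lemma dotvNl (a c : 'rV[R]_n) : dotv (- a) c = - dotv a c.
Proof. by rewrite /dotv -sumrN; apply: eq_bigr => i _; rewrite mxE mulNr. Qed.
Lemma dotvBl (a b c : 'rV[R]_n) : dotv (a - b) c = dotv a c - dotv b c.
Proof. by rewrite dotvDl dotvNl. Qed.
Lemma dotvZl (t : R) (a c : 'rV[R]_n) : dotv (t *: a) c = t * dotv a c.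
Proof. by rewrite /dotv mulr_sumr; apply: eq_bigr => i _; rewrite mxE mulrA. Qed.
Lemma dotvC (a c : 'rV[R]_n) : dotv a c = dotv c a.
Proof. by rewrite /dotv; apply: eq_bigr => i _; rewrite mulrC. Qed.
Lemma dotvZr (t : R) (a c : 'rV[R]_n) : dotv a (t *: c) = t * dotv a c.
Proof. by rewrite dotvC dotvZl dotvC. Qed.
Lemma dotv_ge0 (a : 'rV[R]_n) : 0 <= dotv a a.
Proof. by apply: sumr_ge0 => i _; rewrite -expr2 sqr_ge0. Qed.

Lemma cs_fun (a b : 'I_n -> R) :
  (\sum_i a i * b i) ^+ 2 <= (\sum_i a i ^+ 2) * (\sum_i b i ^+ 2).
Proof.
set A := \sum_i a i ^+ 2; set B := \sum_i b i ^+ 2; set C := \sum_i a i * b i.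
have A0 : 0 <= A by apply: sumr_ge0 => i _; exact: sqr_ge0.
have [Ae0|Apos] := eqVneq A 0.
  have ai0 : forall i, a i = 0.
    move=> i; apply/eqP; rewrite -sqrf_eq0; apply/eqP.
    exact: (psumr_eq0P (fun i _ => sqr_ge0 (a i)) Ae0).
  have -> : C = 0 by rewrite /C big1 // => i _; rewrite ai0 mul0r.
  by rewrite Ae0 expr0n /= mul0r.
have Agt0 : 0 < A by rewrite lt_def Apos A0.
have H : 0 <= \sum_i (A * b i - C * a i) ^+ 2 by apply: sumr_ge0 => i _; exact: sqr_ge0.
have E : \sum_i (A * b i - C * a i) ^+ 2 = A * (A * B - C ^+ 2).
  have -> : \sum_i (A * b i - C * a i) ^+ 2 =
    \sum_i ((A ^+ 2) * b i ^+ 2 - (2 * A * C) * (a i * b i) + C ^+ 2 * a i ^+ 2).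
    by apply: eq_bigr => i _; ring.
  rewrite big_split /= sumrB -!mulr_sumr -/A -/B -/C; ring.
move: H; rewrite E pmulr_rge0 // subr_ge0 => H.
by [].
Qed.

Lemma cs_dot (a b : 'rV[R]_n) : dotv a b ^+ 2 <= dotv a a * dotv b b.
Proof.
have := cs_fun (fun i => a ord0 i) (fun i => b ord0 i).
have E : forall c : 'rV[R]_n, dotv c c = \sum_i c ord0 i ^+ 2.
  by move=> c; apply: eq_bigr => i _; rewrite expr2.
by rewrite !E.
Qed.

Lemma cs_norm (a b : 'rV[R]_n) : dotv a b <= norm2 a * norm2 b.
Proof.
rewrite /norm2 -sqrtrM ?dotv_ge0 //.
apply: (le_trans (ler_norm _)); rewrite -sqrtr_sqr; apply: ler_wsqrtr; exact: cs_dot.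
Qed.

Lemma norm2Z (t : R) (a : 'rV[R]_n) : 0 <= t -> norm2 (t *: a) = t * norm2 a.
Proof.
move=> t0; rewrite /norm2 dotvZl dotvZr mulrA -expr2 sqrtrM ?sqr_ge0 //.
by rewrite sqrtr_sqr ger0_norm.
Qed.

Lemma norm2_sq (a : 'rV[R]_n) : norm2 a * norm2 a = dotv a a.
Proof. by rewrite -expr2 sqr_sqrtr // dotv_ge0. Qed.

Lemma descent f g L (Hg : is_gradient f g) (HL : lipschitz_grad L g) (y v : 'rV[R]_n) :
  f (y + v) <= f y + dotv (g y) v + L / 2 * dotv v v.
Proof.
set a := dotv (g y) v; set K := L / 2 * dotv v v.
have := @mono01 ((fun s : R => f (y + s *: v)) - (id * cst a + id ^+ 2 * cst K))
  (fun t => dotv (g (y + t *: v)) v - (a + 2 * t * K)).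
move=> /(_ (fun t => @quad_derive _ _ a K t (@grad_line _ _ Hg y v t))) H.
have : (((fun s : R => f (y + s *: v)) - (id * cst a + id ^+ 2 * cst K)) 1 <=
   ((fun s : R => f (y + s *: v)) - (id * cst a + id ^+ 2 * cst K)) 0).
  apply: H => t /andP [t0 t1].
  rewrite subr_le0 /a /K.
  have -> : 2 * t * (L / 2 * dotv v v) = L * t * dotv v v by field.
  rewrite -lerBlDl /a -dotvBl.
  apply: (le_trans (cs_norm _ _)).
  have := HL (y + t *: v) y; rewrite addrAC subrr add0r norm2Z; last exact: ltW.
  move=> Hl; rewrite -norm2_sq mulrA.
  apply: ler_wpM2r; first exact: sqrtr_ge0.
  by rewrite -mulrA.
have E : forall s : R, ((fun s : R => f (y + s *: v)) - (id * cst a + id ^+ 2 * cst K)) s =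
  f (y + s *: v) - (s * a + s ^+ 2 * K) by [].
rewrite !E scale1r scale0r addr0 expr1n expr0n /= !mul1r !mul0r !addr0 subr0.
by rewrite lerBlDr addrA.
Qed.

Lemma convexity f g mu (Hg : is_gradient f g) (mu0 : 0 <= mu)
  (Hsc : strongly_convex_grad mu g) (y v : 'rV[R]_n) :
  f y + dotv (g y) v <= f (y + v).
Proof.
set a := dotv (g y) v.
have := @mono01 (- ((fun s : R => f (y + s *: v)) - (id * cst a + id ^+ 2 * cst 0)))
  (fun t => - (dotv (g (y + t *: v)) v - (a + 2 * t * 0))).
move=> /(_ (fun t => is_deriveN (@quad_derive _ _ a 0 t (@grad_line _ _ Hg y v t)))) H.
have : ((- ((fun s : R => f (y + s *: v)) - (id * cst a + id ^+ 2 * cst 0))) 1 <=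
   (- ((fun s : R => f (y + s *: v)) - (id * cst a + id ^+ 2 * cst 0))) 0).
  apply: H => t /andP [t0 t1].
  rewrite oppr_le0 mulr0 addr0 subr_ge0 /a -subr_ge0 -dotvBl.
  have := Hsc (y + t *: v) y; rewrite addrAC subrr add0r dotvZr dotvZl dotvZr => Hs.
  have : 0 <= t * dotv (g (y + t *: v) - g y) v.
    apply: le_trans Hs; have t0' := ltW t0.
    by rewrite mulr_ge0 // mulr_ge0 // mulr_ge0 // dotv_ge0.
  by rewrite pmulr_rge0.
have E : forall s : R, (- ((fun s : R => f (y + s *: v)) - (id * cst a + id ^+ 2 * cst 0))) s =
  - (f (y + s *: v) - (s * a + s ^+ 2 * 0)) by [].
rewrite !E scale1r scale0r addr0 expr1n expr0n /= !mul1r !mul0r !addr0 subr0.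
by rewrite lerN2 lerBrDr.
Qed.


Definition Pr (p : 'I_n -> R) (d : {ffun 'I_n -> bool}) : R :=
  \prod_(i < n) (if d i then p i else 1 - p i).

Lemma Pr_sum1 (p : 'I_n -> R) : \sum_d Pr p d = 1.
Proof.
rewrite /Pr -(bigA_distr_bigA (fun i (b : bool) => if b then p i else 1 - p i)) /=.
by apply: big1 => i _; rewrite big_bool /= addrC subrK.
Qed.

Lemma Pr_marg (p : 'I_n -> R) (i : 'I_n) : \sum_d Pr p d * (d i)%:R = p i.
Proof.
have E := bigA_distr_bigA (fun j (b : bool) => (if b then p j else 1 - p j) * (if j == i then (b : nat)%:R else 1)).
have E2 : forall d : {ffun 'I_n -> bool}, \prod_(j < n) ((if d j then p j else 1 - p j) * (if j == i then (d j : nat)%:R else 1)) = Pr p d * (d i)%:R.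
  move=> d; rewrite big_split /=; congr (_ * _).
  by rewrite (bigD1 i) //= eqxx big1 ?mulr1 // => j /negbTE ->.
under eq_bigr do rewrite -E2.
rewrite -E /= (bigD1 i) //= big_bool /= eqxx mulr1 mulr0 addr0.
rewrite [X in _ * X]big1 ?mulr1 //.
by move=> j /negbTE ji; rewrite big_bool /= ji !mulr1 addrC subrK.
Qed.

Lemma Pr_lin (p : 'I_n -> R) (c : 'I_n -> R) (K : R) :
  \sum_d Pr p d * (K + \sum_i (d i : nat)%:R * c i) = K + \sum_i p i * c i.
Proof.
under eq_bigr do rewrite mulrDr mulr_sumr.
rewrite big_split /= -mulr_suml Pr_sum1 mul1r exchange_big /=; congr (_ + _).
apply: eq_bigr => i _; rewrite -(Pr_marg p i) mulr_suml; apply: eq_bigr => d _.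
by rewrite mulrA.
Qed.

Lemma Pr_ge0 (p : 'I_n -> R) d : (forall i, 0 <= p i <= 1) -> 0 <= Pr p d.
Proof.
move=> H; apply: prodr_ge0 => i _; have /andP [h0 h1] := H i.
by case: (d i); rewrite ?subr_ge0.
Qed.


Lemma main_lemma (f : 'rV[R]_n -> R)
  (g : 'rV[R]_n -> 'rV[R]_n) (mu L eps alpha eta : R) (xstar x : 'rV[R]_n) :
  is_gradient f g ->
  0 < mu -> strongly_convex_grad mu g ->
  lipschitz_grad L g ->
  is_minimizer f xstar ->
  0 < eps -> 0 < alpha -> 0 < eta ->
  alpha < Num.sqrt (4 * eps * mu / (L ^+ 2 * n%:R)) ->
  (forall i : 'I_n, `|g x ord0 i| <= eta) ->
  f x - f xstar > eps ->
  mgd_step_expect f g alpha eta x < f x.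
Proof.
move=> Hg mu0 Hsc HL Hmin eps0 al0 eta0 Hal Heta Hgap.
set Q := 4 * eps * mu / (L ^+ 2 * n%:R).
have sQ0 : 0 < Num.sqrt Q by apply: lt_trans Hal.
have Q0 : 0 < Q by rewrite -sqrtr_gt0.
have LN0 : L ^+ 2 * n%:R != 0.
  by apply/negP => /eqP E; move: Q0; rewrite /Q E invr0 mulr0 ltxx.
have n0 : (0 < n)%N.
  by rewrite lt0n; apply/negP => /eqP E; move: LN0; rewrite E mulr0 eqxx.
have L0' : L != 0.
  by apply/negP => /eqP E; move: LN0; rewrite E expr0n mul0r eqxx.
have LNpos : 0 < L ^+ 2 * n%:R by rewrite lt_def LN0 mulr_ge0 ?sqr_ge0 ?ler0n.
have al2 : alpha ^+ 2 * (L ^+ 2 * n%:R) < 4 * eps * mu.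
  have : alpha ^+ 2 < Q.
    rewrite -[Q in _ < Q](sqr_sqrtr (ltW Q0)) ltr_pXn2r // nnegrE ?ltW //.
  by rewrite /Q ltr_pdivlMr.
have Lpos : 0 < L.
  pose c : 'rV[R]_n := const_mx 1.
  have cc : dotv c c = n%:R.
    rewrite /dotv (eq_bigr (fun=> 1)) ?sumr_const ?card_ord // => i _.
    by rewrite mxE mulr1.
  have nc : 0 < norm2 c by rewrite /norm2 sqrtr_gt0 cc ltr0n.
  have := HL x (x - c); rewrite opprB addrCA subrr addr0 => H.
  have : 0 <= L * norm2 c by apply: le_trans H; exact: sqrtr_ge0.
  by rewrite pmulr_lge0 // => L0; rewrite lt_def L0' L0.
set Gs := g xstar.
have Ns0 : dotv Gs Gs = 0.
  have H1 := @descent _ _ _ Hg HL xstar (- (L^-1) *: Gs).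
  have H2 := Hmin (xstar + - L^-1 *: Gs).
  have := le_trans H2 H1; rewrite dotvZr dotvZl dotvZr. rewrite -/Gs -addrA.
  have -> : - L^-1 * dotv Gs Gs + L / 2 * (- L^-1 * (- L^-1 * dotv Gs Gs))
     = - (dotv Gs Gs / (2 * L)) by field.
  rewrite lerDl oppr_ge0 pmulr_lle0 ?invr_gt0 ?mulr_gt0 // => H.
  by apply/le_anti; rewrite H dotv_ge0.
have Gs_orth : forall D, dotv Gs D = 0.
  move=> D; have := cs_dot Gs D; rewrite Ns0 mul0r => H.
  apply/eqP; rewrite -sqrf_eq0; apply/eqP/le_anti; rewrite H sqr_ge0.
  by [].
set G := g x. set N := dotv G G. set D := x - xstar.
have conv := @convexity _ _ _ Hg (ltW mu0) Hsc x (xstar - x).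
rewrite addrCA subrr addr0 in conv.
have dG : dotv G (xstar - x) = - dotv G D by rewrite /D -opprB dotvC dotvNl dotvC.
set C := dotv G D.
have Cgt : eps < C.
  rewrite dG -/C in conv; move: conv Hgap; generalize (f x) (f xstar) C => a b c; lra.
have C0 : 0 < C by apply: lt_trans Cgt.
have sc := Hsc x xstar; rewrite dotvBl Gs_orth subr0 -/D -/C in sc.
have cs := cs_dot G D; rewrite -/C -/N in cs.
have N0 : 0 <= N by exact: dotv_ge0.
have Ngt : mu * eps < N.
  have H1 : mu * C ^+ 2 <= N * C.
    apply: (@le_trans _ _ (mu * (N * dotv D D))); first by rewrite ler_wpM2l // ltW.
    by rewrite mulrCA ler_wpM2l.
  have H2 : mu * C <= N by rewrite expr2 mulrA ler_pM2r in H1.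
  by apply: lt_le_trans H2; rewrite ltr_pM2l.
have Npos : 0 < N by apply: le_lt_trans Ngt; rewrite mulr_ge0 // ltW.
set S1 := \sum_i `|G ord0 i|.
have E2 : \sum_i `|G ord0 i| ^+ 2 = N.
  by apply: eq_bigr => i _; rewrite real_normK ?num_real // expr2.
have S1sq : S1 ^+ 2 <= n%:R * N.
  have := cs_fun (fun i => `|G ord0 i|) (fun _ => 1).
  have E1 : \sum_i `|G ord0 i| * 1 = S1 by apply: eq_bigr => i _; rewrite mulr1.
  have E3 : \sum_(i < n) (1:R) ^+ 2 = n%:R.
    by rewrite (eq_bigr (fun=> 1)) ?sumr_const ?card_ord // => i _; rewrite expr1n.
  by rewrite E1 E2 E3 mulrC.
have S10 : 0 <= S1 by apply: sumr_ge0 => i _; exact: normr_ge0.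
have key : L * alpha * S1 < 2 * N.
  rewrite -(@ltr_pXn2r _ 2) // ?nnegrE; last 2 first.
  - by rewrite mulr_ge0 // mulr_ge0 // ltW.
  - by rewrite mulr_ge0 // ler0n.
  apply: (@le_lt_trans _ _ (alpha ^+ 2 * (L ^+ 2 * n%:R) * N)).
    have -> : (L * alpha * S1) ^+ 2 = (alpha ^+ 2 * L ^+ 2) * S1 ^+ 2 by ring.
    have -> : alpha ^+ 2 * (L ^+ 2 * n%:R) * N = (alpha ^+ 2 * L ^+ 2) * (n%:R * N) by ring.
    by apply: ler_wpM2l; [rewrite mulr_ge0 ?sqr_ge0 | exact: S1sq].
  apply: (@lt_le_trans _ _ (4 * eps * mu * N)); first by rewrite ltr_pM2r.
  have : 4 * eps * mu * N <= 4 * N * N.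
    have -> : 4 * eps * mu * N = 4 * ((mu * eps) * N) by ring.
    have -> : 4 * N * N = 4 * (N * N) by ring.
    by rewrite ler_pM2l // ler_pM2r // ltW.
  by rewrite exprMn; congr (_ <= _); rewrite expr2; ring.
set p := fun i => `|G ord0 i| / eta.
have pE : forall i, mgd_p g eta x i = p i.
  by move=> i; rewrite /mgd_p min_l // ler_pdivrMr // mul1r Heta.
have p01 : forall i, 0 <= p i <= 1.
  move=> i; rewrite -pE /mgd_p; apply/andP; split.
    by rewrite le_min ler01 divr_ge0 // ltW.
  by rewrite ge_min lexx orbT.
set c := fun i => - alpha * `|G ord0 i| + L / 2 * alpha ^+ 2.
have step : forall d, f (mgd_next g alpha x d) <= f x + \sum_i (d i : nat)%:R * c i.
  move=> d; set v := mgd_next g alpha x d - x.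
  have := @descent _ _ _ Hg HL x v; rewrite /v addrC subrK -/v -/G => H.
  apply: le_trans H _; rewrite -addrA lerD2l.
  have vi : forall i, v ord0 i = - (alpha * Num.sg (G ord0 i) * (d i : nat)%:R).
    by move=> i; rewrite /v !mxE addrAC subrr add0r.
  have dGv : dotv G v = \sum_i (d i : nat)%:R * (- alpha * `|G ord0 i|).
    by apply: eq_bigr => i _; rewrite vi normrEsg; ring.
  have dv : dotv v v <= \sum_i (d i : nat)%:R * alpha ^+ 2.
    apply: ler_sum => i _; rewrite vi.
    case: (d i) => /=; rewrite ?mulr0n ?mulr1n; last by rewrite !(mulr0, oppr0, mul0r).
    have -> : - (alpha * Num.sg (G ord0 i) * 1) * - (alpha * Num.sg (G ord0 i) * 1)
       = alpha ^+ 2 * Num.sg (G ord0 i) ^+ 2 by ring.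
    rewrite mul1r; apply: ler_piMr; first exact: sqr_ge0.
    by case: sgrP => _; rewrite ?expr0n ?expr1n ?sqrrN ?expr1n.
  rewrite dGv /c.
  under [X in _ <= X]eq_bigr do rewrite mulrDr.
  rewrite big_split /= lerD2l.
  have -> : \sum_i (d i : nat)%:R * (L / 2 * alpha ^+ 2) = L / 2 * \sum_i (d i : nat)%:R * alpha ^+ 2.
    by rewrite mulr_sumr; apply: eq_bigr => i _; ring.
  by rewrite ler_wpM2l // divr_ge0 // ltW.
rewrite /mgd_step_expect.
apply: (@le_lt_trans _ _ (\sum_d Pr p d * (f x + \sum_i (d i : nat)%:R * c i))).
  apply: ler_sum => d _.
  have -> : \prod_(i < n) (if d i then mgd_p g eta x i else 1 - mgd_p g eta x i) = Pr p d.
    by apply: eq_bigr => i _; rewrite pE.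
  by apply: ler_wpM2l; [exact: Pr_ge0 | exact: step].
rewrite Pr_lin gtrDl.
have -> : \sum_i p i * c i = alpha / eta * \sum_i (L * alpha / 2 * `|G ord0 i| - `|G ord0 i| ^+ 2).
  rewrite mulr_sumr; apply: eq_bigr => i _; rewrite /p /c.
  by field; rewrite gt_eqF.
rewrite sumrB E2 -mulr_sumr -/S1 pmulr_rlt0 ?divr_gt0 // subr_lt0.
have -> : L * alpha / 2 * S1 = (L * alpha * S1) / 2 by field.
by rewrite ltr_pdivrMr // [N * 2]mulrC.
Qed.

End S.

Theorem corollary6p3 (R : realType) (n : nat) (f : 'rV[R]_n -> R)
  (g : 'rV[R]_n -> 'rV[R]_n) (mu L eps alpha eta : R) (xstar x : 'rV[R]_n) :
  is_gradient f g ->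
  0 < mu -> strongly_convex_grad mu g ->
  lipschitz_grad L g ->
  is_minimizer f xstar ->
  0 < eps -> 0 < alpha -> 0 < eta ->
  alpha < Num.sqrt (4 * eps * mu / (L ^+ 2 * n%:R)) ->
  (forall i : 'I_n, `|g x ord0 i| <= eta) ->
  f x - f xstar > eps ->
  mgd_step_expect f g alpha eta x < f x.
Proof. exact: main_lemma. Qed.
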